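(* Let $I$ be a resident-minimal instance and $J$ a resident-changeless and hospital-complete extension of $I$. Then $J$ is resident-minimal, $\mathrm{prop}(I)=\mathrm{prop}(J)$, and $\mathrm{tent}(I)\setminus\mathrm{pend}(I)\subseteq\mathrm{tent}(J)\subseteq\mathrm{tent}(I)$.
   Context: An instance $I$ consists of finite disjoint sets $R$ (residents) and $H$ (hospitals), a positive integer quota $q_h$ for each $h\in H$, for each $r\in R$ a preference list of $r$ (a sequence of distinct members of $H$, not necessarily all), and for each $h\in H$ a preference list of $h$ (a sequence of distinct members of $R$). A list is complete if it contains every member of the opposite side; an instance is hospital-complete if every hospital's list is complete. A match is a pair $(r,h)\in R\times H$. For a set $M$ of matches, $\mathrm{res}_h M=\{r:(r,h)\in M\}$, $\mathrm{res}\,M=\{r:(r,h)\in M\text{ for some }h\}$. $J$ is an extension of $I$ (same $R,H$, quotas) if every list of $J$ has the corresponding list of $I$ as a prefix; it is resident-changeless if every resident's list is the same in $I$ and $J$. An event is $(r,h)^+$ (proposal) or $(r,h)^-$ (rejection). For an event sequence $\sigma$, $\mathrm{prop}(\sigma)$, $\mathrm{rej}(\sigma)$ are the sets of matches proposed/rejected in $\sigma$, $\mathrm{tent}(\sigma)=\mathrm{prop}(\sigma)\setminus\mathrm{rej}(\sigma)$, and $\mathrm{pend}_I(\sigma)$ is the set of $(r,h)\in\mathrm{tent}(\sigma)$ with $r$ not on the list of $h$ in $I$. A match $(r,h)\in M$ is ousted from $M$ in $I$ if the list of $h$ in $I$ contains at least $q_h$ residents of $\mathrm{res}_h M$ and either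 $r$ is not on it or $r$ is preceded on it by at least $q_h$ residents of $\mathrm{res}_h M$. $I$-feasible sequences: the empty sequence is $I$-feasible; if $\sigma$ is $I$-feasible then $\sigma+(r,h)^+$ is $I$-feasible if $r\notin\mathrm{res}\,\mathrm{tent}(\sigma)$, $(r,h)\notin\mathrm{prop}(\sigma)$, $h$ is on the list of $r$ in $I$ and $(r,h')\in\mathrm{rej}(\sigma)$ for every $h'$ preceding $h$ on it; and $\sigma+(r,h)^-$ is $I$-feasible if $(r,h)$ is ousted from $\mathrm{prop}(\sigma)$ in $I$ and $(r,h)\notin\mathrm{rej}(\sigma)$. All maximal $I$-feasible sequences contain the same events; $\mathrm{prop}(I),\mathrm{tent}(I),\mathrm{pend}(I)$ denote $\mathrm{prop}(\sigma),\mathrm{tent}(\sigma),\mathrm{pend}_I(\sigma)$ for any maximal $I$-feasible $\sigma$. $I$ is resident-minimal if $\mathrm{prop}(I)$ equals the set of matches $(r,h)$ with $h$ on the list of $r$ in $I$. *)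

(* Defs.v *)
(* Residents and hospitals are two finite types (hence disjoint). *)
From mathcomp Require Import all_boot.
Set Implicit Arguments. Unset Strict Implicit. Unset Printing Implicit Defensive.

Section HR.
Variables (R H : finType).

Record instance := Instance {
  quota : H -> nat;
  rlist : R -> seq H;
  hlist : H -> seq R
}.

Definition wf_instance (I : instance) : Prop :=
  (forall h, 0 < quota I h) /\ (forall r, uniq (rlist I r)) /\ (forall h, uniq (hlist I h)).

Definition hospital_complete (I : instance) : Prop :=
  forall h r, r \in hlist I h.

Definition extension (I J : instance) : Prop :=
  (forall h, quota J h = quota I h) /\
  (forall r, prefix (rlist I r) (rlist J r)) /\
  (forall h, prefix (hlist I h) (hlist J h)).

Definition resident_changeless (I J : instance) : Prop :=
  forall r, rlist J r = rlist I r.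

(* a match is a pair (r,h); an event is (true,(r,h)) = proposal (r,h)^+,
   (false,(r,h)) = rejection (r,h)^- *)
Definition event := (bool * (R * H))%type.
Definition propose (m : R * H) : event := (true, m).
Definition reject (m : R * H) : event := (false, m).

Definition prop_of (s : seq event) : {set R * H} := [set m | propose m \in s].
Definition rej_of (s : seq event) : {set R * H} := [set m | reject m \in s].
Definition tent_of (s : seq event) : {set R * H} := prop_of s :\: rej_of s.
Definition pend_of (I : instance) (s : seq event) : {set R * H} :=
  [set m in tent_of s | m.1 \notin hlist I m.2].

Definition res_h (M : {set R * H}) (h : H) : {set R} := [set r | (r, h) \in M].
Definition res (M : {set R * H}) : {set R} := [set r | [exists h, (r, h) \in M]].

Definition ousted (I : instance) (M : {set R * H}) (r : R) (h : H) : Prop :=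
  (r, h) \in M /\
  quota I h <= #|[set r' in res_h M h | r' \in hlist I h]| /\
  (r \notin hlist I h \/
   quota I h <= #|[set r' in res_h M h | (r' \in hlist I h) &&
                                         (index r' (hlist I h) < index r (hlist I h))]|).

Inductive feasible (I : instance) : seq event -> Prop :=
| feas_nil : feasible I [::]
| feas_prop s r h :
    feasible I s ->
    r \notin res (tent_of s) ->
    (r, h) \notin prop_of s ->
    h \in rlist I r ->
    (forall h', h' \in rlist I r -> index h' (rlist I r) < index h (rlist I r) ->
                (r, h') \in rej_of s) ->
    feasible I (rcons s (propose (r, h)))
| feas_rej s r h :
    feasible I s ->
    ousted I (prop_of s) r h ->
    (r, h) \notin rej_of s ->
    feasible I (rcons s (reject (r, h))).

Definition maximal_feasible (I : instance) (s : seq event) : Prop :=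
  feasible I s /\ forall e, ~ feasible I (rcons s e).

(* prop(I) is prop(s) for any maximal I-feasible s (all give the same events) *)
Definition acceptable (I : instance) : {set R * H} := [set m | m.2 \in rlist I m.1].

Definition resident_minimal (I : instance) : Prop :=
  forall s, maximal_feasible I s -> prop_of s = acceptable I.

End HR.

(* Main.v *)
Require Import Defs.
From mathcomp Require Import all_boot.
From Stdlib Require Import Classical.
From mathcomp Require Import zify.

Set Implicit Arguments. Unset Strict Implicit. Unset Printing Implicit Defensive.

Section Aux.
Variables (R H : finType).
Implicit Types (I J : instance R H) (s t : seq (event R H)).

Lemma prop_rcons_p s (m : R * H) : prop_of (rcons s (propose m)) = m |: prop_of s.
Proof. by apply/setP => x; rewrite !inE mem_rcons in_cons xpair_eqE eqxx. Qed.
Lemma prop_rcons_r s (m : R * H) : prop_of (rcons s (reject m)) = prop_of s.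
Proof. by apply/setP => x; rewrite !inE mem_rcons in_cons xpair_eqE. Qed.
Lemma rej_rcons_p s (m : R * H) : rej_of (rcons s (propose m)) = rej_of s.
Proof. by apply/setP => x; rewrite !inE mem_rcons in_cons xpair_eqE. Qed.
Lemma rej_rcons_r s (m : R * H) : rej_of (rcons s (reject m)) = m |: rej_of s.
Proof. by apply/setP => x; rewrite !inE mem_rcons in_cons xpair_eqE eqxx. Qed.

Lemma ousted_mono I (M M' : {set R * H}) r h :
  M \subset M' -> ousted I M r h -> ousted I M' r h.
Proof.
move=> sMM' [rM [c1 c2]]; split; first exact: (subsetP sMM').
have sub : forall P : pred R,
  #|[set r' in res_h M h | P r']| <= #|[set r' in res_h M' h | P r']|.
  move=> P; apply: subset_leq_card; apply/subsetP => x; rewrite !inE.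
  by case/andP => /(subsetP sMM') -> ->.
split; first exact: leq_trans c1 (sub _).
case: c2 => [-> | c2]; [by left | right].
exact: leq_trans c2 (sub _).
Qed.

Lemma ousted_IJ I J (M : {set R * H}) r h :
  quota J h = quota I h -> prefix (hlist I h) (hlist J h) ->
  ousted I M r h -> ousted J M r h.
Proof.
move=> eq /prefixP [rest eJ] [rM [c1 c2]]; split => //; rewrite eq eJ.
split.
  apply: leq_trans c1 _; apply: subset_leq_card; apply/subsetP => x; rewrite !inE mem_cat.
  by case/andP => -> ->.
right; case: c2 => c2.
  apply: leq_trans c1 _; apply: subset_leq_card; apply/subsetP => x; rewrite !inE mem_cat.
  case/andP => -> xI; rewrite xI /= !index_cat xI (negbTE c2).
  by rewrite (leq_trans _ (leq_addr _ _)) // index_mem.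
apply: leq_trans c2 _; apply: subset_leq_card; apply/subsetP => x; rewrite !inE mem_cat.
case/andP => -> /andP [xI lt]; rewrite xI /= !index_cat xI.
case: ifP => // rI; by rewrite (leq_trans _ (leq_addr _ _)) // index_mem.
Qed.

Lemma ousted_JI I J (M : {set R * H}) r h :
  quota J h = quota I h -> prefix (hlist I h) (hlist J h) -> r \in hlist I h ->
  ousted J M r h -> ousted I M r h.
Proof.
move=> eq /prefixP [rest eJ] rI [rM [c1 c2]]; rewrite eq eJ in c1 c2.
have key : [set r' in res_h M h | (r' \in hlist I h ++ rest) &&
             (index r' (hlist I h ++ rest) < index r (hlist I h ++ rest))]
   \subset [set r' in res_h M h | (r' \in hlist I h) &&
             (index r' (hlist I h) < index r (hlist I h))].
  apply/subsetP => x; rewrite !inE; case/and3P => -> _.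
  rewrite !index_cat rI; case: ifP => xI //= lt.
  have := index_mem r (hlist I h); rewrite rI => lt2.
  by have := ltn_trans (leq_ltn_trans (leq_addr _ _) lt) lt2; rewrite ltnn.
have c3 : quota I h <= #|[set r' in res_h M h | (r' \in hlist I h) &&
             (index r' (hlist I h) < index r (hlist I h))]|.
  case: c2 => [|c2]; first by rewrite mem_cat rI.
  exact: (leq_trans c2 (subset_leq_card key)).
split => //; split; last by right.
apply: (leq_trans c3); apply: subset_leq_card; apply/subsetP => x; rewrite !inE.
by case/and3P => -> ->.
Qed.

Definition inv I s :=
  [/\ rej_of s \subset prop_of s,
      (forall r h h', (r, h) \in prop_of s -> h' \in rlist I r ->
         index h' (rlist I r) < index h (rlist I r) -> (r, h') \in rej_of s),
      prop_of s \subset acceptable I,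
      (forall r h, (r, h) \in rej_of s -> ousted I (prop_of s) r h)
    & uniq s].

Lemma feasible_inv I s : feasible I s -> inv I s.
Proof.
elim => [|{}s r h fs [i1 i2 i3 i4 i5] nr np hr hb|{}s r h fs [i1 i2 i3 i4 i5] ou nr].
- split => //.
  + by move=> r h h'; rewrite inE.
  + by apply/subsetP => x; rewrite inE.
  + by move=> r h; rewrite inE.
- rewrite /inv prop_rcons_p rej_rcons_p; split.
  + exact: subset_trans i1 (subsetUr _ _).
  + move=> r0 h0 h'; rewrite in_setU1; case/orP => [/eqP [-> ->]|]; first exact: hb.
    exact: i2.
  + apply/subsetP => x; rewrite in_setU1; case/orP => [/eqP ->|]; first by rewrite inE.
    exact: (subsetP i3).
  + move=> r0 h0 /i4; apply: ousted_mono; exact: subsetUr.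
  + rewrite rcons_uniq i5 andbT; apply: contra np; by rewrite inE.
- rewrite /inv prop_rcons_r rej_rcons_r; split.
  + apply/subsetP => x; rewrite in_setU1; case/orP => [/eqP ->|]; first by case: ou.
    exact: (subsetP i1).
  + move=> r0 h0 h' p hh lt; rewrite in_setU1 (i2 _ _ _ p hh lt) orbT //.
  + exact: i3.
  + move=> r0 h0; rewrite in_setU1; case/orP => [/eqP [-> ->]|] //; exact: i4.
  + rewrite rcons_uniq i5 andbT; apply: contra nr; by rewrite inE.
Qed.

Lemma maximal_rej I s r h :
  maximal_feasible I s -> ousted I (prop_of s) r h -> (r, h) \in rej_of s.
Proof.
move=> [fs mx] ou; apply/negPn/negP => nr.
by apply: (mx (reject (r, h))); apply: feas_rej.
Qed.

Lemma exists_maximal I : exists s, maximal_feasible I s.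
Proof.
suff: forall n s, feasible I s -> #|{: bool * (R * H)}| - size s <= n ->
        exists t, maximal_feasible I t.
  by move=> /(_ _ [::] (feas_nil I) (leqnn _)).
elim => [|n IH] s fs hn.
  exists s; split => // e fe.
  have [_ _ _ _ u] := feasible_inv fe.
  have := card_uniqP u; rewrite size_rcons => ce.
  have := max_card (mem (rcons s e)); rewrite ce => c.
  rewrite leqn0 subn_eq0 in hn; have := leq_trans c hn; by rewrite ltnn.
destruct (classic (exists e, feasible I (rcons s e))) as [[e fe]|ne].
  apply: (IH _ fe).
  rewrite size_rcons subnS; move: hn; case: (_ - _) => //.
exists s; split => // e fe; apply: ne; by exists e.
Qed.

Lemma simulate I J s t :
  extension I J -> resident_changeless I J ->
  feasible I s -> maximal_feasible J t ->
  prop_of s \subset prop_of t /\ rej_of s \subset rej_of t.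
Proof.
move=> [eq [_ pre]] rc fs mt; have [ft mx] := mt.
have [j1 j2 j3 j4 j5] := feasible_inv ft.
elim: fs => [|{}s r h fs [IH1 IH2] nr np hr hb|{}s r h fs [IH1 IH2] ou nr].
- by split; apply/subsetP => x; rewrite inE.
- rewrite prop_rcons_p rej_rcons_p; split => //.
  rewrite subUset IH1 andbT sub1set.
  apply/negPn/negP => npt.
  have hb' : forall h', h' \in rlist J r -> index h' (rlist J r) < index h (rlist J r) ->
                (r, h') \in rej_of t.
    by rewrite rc => h' h'r lt; apply: (subsetP IH2); apply: hb.
  case: (boolP (r \in res (tent_of t))) => [|nrt].
    rewrite inE => /existsP [h'' /setDP [ph'' nrh'']].
    have h''r : h'' \in rlist J r by have := subsetP j3 _ ph''; rewrite inE.
    case: (ltngtP (index h'' (rlist J r)) (index h (rlist J r))) => c.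
    + by rewrite (hb' _ h''r c) in nrh''.
    + by move/negP: npt; apply; apply: (subsetP j1); apply: (j2 _ _ _ ph'') => //; rewrite rc.
    + have e : h'' = h by apply: (index_inj h h''r _ c); rewrite rc.
      by rewrite -e ph'' in npt.
  apply: (mx (propose (r, h))); apply: feas_prop => //; by rewrite rc.
- rewrite prop_rcons_r rej_rcons_r; split => //.
  rewrite subUset IH2 andbT sub1set.
  apply: (maximal_rej mt).
  apply: (ousted_IJ (eq h) (pre h)); exact: ousted_mono IH1 ou.
Qed.
End Aux.

Theorem proposition4 (R H : finType) (I J : instance R H) :
  wf_instance I -> wf_instance J ->
  resident_minimal I ->
  extension I J -> resident_changeless I J -> hospital_complete J ->
  resident_minimal J /\
  (forall s t, maximal_feasible I s -> maximal_feasible J t ->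
     prop_of s = prop_of t /\
     (tent_of s :\: pend_of I s \subset tent_of t) /\
     (tent_of t \subset tent_of s)).
Proof.
move=> _ _ minI ext rc _.
have accJ : acceptable J = acceptable I.
  by apply/setP => x; rewrite !inE rc.
have minJ : resident_minimal J.
  move=> t mt; have [s ms] := exists_maximal I.
  have [s1 _] := simulate ext rc (proj1 ms) mt.
  have [_ _ j3 _ _] := feasible_inv (proj1 mt).
  apply/eqP; rewrite eqEsubset j3 accJ -(minI _ ms) s1 //.
split => // s t ms mt.
have pst : prop_of s = prop_of t by rewrite (minI _ ms) (minJ _ mt) accJ.
have [eq [_ pre]] := ext.
have [_ _ _ i4 _] := feasible_inv (proj1 ms).
have [_ _ _ j4 _] := feasible_inv (proj1 mt).
split => //; split.
  apply/subsetP => [[r h]]; rewrite /tent_of in_setD /pend_of !in_setD inE.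
  case/and3P => np nrs ps; rewrite /tent_of in_setD nrs ps /= in np.
  rewrite -pst ps andbT; apply/negP => rt.
  move: (j4 _ _ rt); rewrite -pst => ouJ.
  have := ousted_JI (eq h) (pre h) (negbNE np) ouJ.
  by move/(maximal_rej ms); rewrite (negbTE nrs).
apply/subsetP => [[r h]]; rewrite /tent_of !in_setD.
case/andP => nrt pt; rewrite -pst in pt *; rewrite pt andbT; apply/negP => rs.
have := ousted_IJ (eq h) (pre h) (i4 _ _ rs); rewrite pst.
by move/(maximal_rej mt); rewrite (negbTE nrt).
Qed.
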